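(* Let $a_1<a_2<\dots<a_n$ be positive integers with $a_i\le 2i-1$ for all $i$. Then $$\sum_{k=1}^{n}\det_{1\le i,j\le n}\left[\frac{1}{(a_i-j)!}\cdot\begin{cases}1 & i\ne k\\ (a_i-j)(a_i-j-1) & i=k\end{cases}\right]=\left(\sum_{k=1}^n (a_k-k)(a_k-2n+k-1)\right)\det_{1\le i,j\le n}\left[\frac{1}{(a_i-j)!}\right].$$
   Context: Convention: $1/m!=0$ for negative integers $m$ (so the corresponding matrix entries vanish). *)

(* Defs.v *)
From HB Require Import structures.
From mathcomp Require Import all_boot all_order all_algebra.
Set Implicit Arguments. Unset Strict Implicit. Unset Printing Implicit Defensive.
Import Order.TTheory GRing.Theory Num.Theory.
Local Open Scope ring_scope.

(* 1/m! as a rational, with the convention 1/m! = 0 for negative integers m. *)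
Definition invfact (m : int) : rat :=
  match m with
  | Posz k => (k`!%:R)^-1
  | Negz _ => 0
  end.

(* Main.v *)
Require Import Defs.
From HB Require Import structures.
From mathcomp Require Import all_boot all_order all_algebra.
Import Order.TTheory GRing.Theory Num.Theory.
Local Open Scope ring_scope.

Lemma invfactS (z : int) : invfact z * z%:~R = invfact (z - 1).
Proof.
case: z => [[|k]|k].
- by rewrite mulr0.
- have -> : (Posz k.+1 - 1 = Posz k) by rewrite -addn1 PoszD addrK.
  rewrite /= factS natrM invfM mulrC mulrA -[(Posz k.+1)%:~R]/(k.+1%:R).
  by rewrite divff ?mul1r // pnatr_eq0.
- by rewrite mul0r.
Qed.

Lemma cofactor_row (n : nat) (A B : 'M[rat]_n) (k j : 'I_n) :
  (forall i, i != k -> forall j, B i j = A i j) ->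
  cofactor B k j = cofactor A k j.
Proof.
move=> H; rewrite /cofactor; congr (_ * \det _).
by apply/matrixP => i' j'; rewrite !mxE H // eq_sym neq_lift.
Qed.

Lemma colexp (n : nat) (A : 'M[rat]_n) (j j' : 'I_n) :
  \sum_k A k j' * cofactor A k j = if j == j' then \det A else 0.
Proof.
have := congr1 (fun M : 'M[rat]_n => M j j') (mul_adj_mx A).
rewrite !mxE /= => H.
have -> : (if j == j' then \det A else 0) = \det A *+ (j == j') by case: (j == j').
rewrite -H.
by apply: eq_bigr => k _; rewrite mxE mulrC.
Qed.

Lemma wt1 (R : comPzRingType) (x z : R) :
  (x - z) * (x - z - 1) = x ^+ 2 - z ^+ 2 - (z + z + 1) * (x - z).
Proof.
rewrite subr_sqr [(_ + _ + 1) * _]mulrC -mulrBr; congr (_ * _).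
by rewrite !opprD !addrA addrK.
Qed.

Lemma wt2 (R : comPzRingType) (x z c : R) :
  (x - z) * (x - c + z - 1) = x ^+ 2 - z ^+ 2 - (c + 1) * (x - z).
Proof.
rewrite subr_sqr [(c + 1) * _]mulrC -mulrBr; congr (_ * _).
by rewrite opprD addrA [x - c + z]addrAC.
Qed.

Theorem lemma4p2 (n : nat) (a : 'I_n -> nat)
    (hpos : forall i, (0 < a i)%N)
    (hinc : forall i j : 'I_n, (i < j)%N -> (a i < a j)%N)
    (hbnd : forall i : 'I_n, (a i <= 2 * i.+1 - 1)%N) :
  \sum_(k < n)
     \det (\matrix_(i < n, j < n)
             (invfact ((a i)%:Z - (j.+1)%:Z) *
              (if i == k then
                 (((a i)%:Z - (j.+1)%:Z) * ((a i)%:Z - (j.+1)%:Z - 1))%:~R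
               else 1)))
  = (\sum_(k < n)
        (((a k)%:Z - (k.+1)%:Z) * ((a k)%:Z - (2 * n)%:Z + (k.+1)%:Z - 1))%:~R)
    * \det (\matrix_(i < n, j < n) invfact ((a i)%:Z - (j.+1)%:Z)).
Proof.
case: n a hpos hinc hbnd => [|m] a _ _ _.
  by rewrite !big_ord0 mul0r.
set A := \matrix_(i < m.+1, j < m.+1) invfact ((a i)%:Z - (j.+1)%:Z).
set d := \det A.
set y := fun k : 'I_m.+1 => ((a k)%:Z)%:~R : rat.
set J := fun j : nat => ((j.+1)%:Z)%:~R : rat.
have shift : forall k (j : nat), invfact ((a k)%:Z - (j.+1)%:Z) * (y k - J j)
    = invfact ((a k)%:Z - (j.+2)%:Z).
  move=> k j; rewrite /y /J -intrB invfactS; congr invfact.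
  have -> : (Posz j.+2) = Posz j.+1 + 1 by rewrite -PoszD addn1.
  by rewrite opprD addrA.
have step1 : \sum_(k < m.+1)
     \det (\matrix_(i < m.+1, j < m.+1)
             (invfact ((a i)%:Z - (j.+1)%:Z) *
              (if i == k then
                 (((a i)%:Z - (j.+1)%:Z) * ((a i)%:Z - (j.+1)%:Z - 1))%:~R
               else 1)))
   = \sum_(k < m.+1) \sum_(j < m.+1)
       ((y k - J j) * (y k - J j - 1)) * (A k j * cofactor A k j).
  apply: eq_bigr => k _; rewrite (expand_det_row _ k); apply: eq_bigr => j _.
  rewrite (@cofactor_row _ A); last first.
    by move=> i ik j'; rewrite !mxE (negbTE ik) mulr1.
  rewrite !mxE eqxx intrM !intrB /y /J.
  by rewrite mulrA [_ * invfact _]mulrC !mulrA.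
rewrite step1.
have rowS : forall k, \sum_(j < m.+1) A k j * cofactor A k j = d.
  by move=> k; rewrite /d (expand_det_row _ k).
have colS : forall j, \sum_(k < m.+1) A k j * cofactor A k j = d.
  by move=> j; rewrite /d (expand_det_col _ j).
set E := \sum_(k < m.+1) invfact ((a k)%:Z - (m.+2)%:Z) * cofactor A k ord_max.
have G : forall v : 'I_m.+1 -> rat,
    \sum_(k < m.+1) \sum_(j < m.+1) v j * (y k - J j) * (A k j * cofactor A k j)
    = v ord_max * E.
  move=> v; rewrite exchange_big big_ord_recr /=.
  rewrite big1 ?add0r.
    rewrite /E mulr_sumr; apply: eq_bigr => k _.
    by rewrite mxE mulrA -[v _ * _ * _]mulrA [(y k - J m) * _]mulrC shift mulrA.
  move=> j _.
  have -> : \sum_(k < m.+1) v (widen_ord (leqnSn m) j) * (y k - J (widen_ord (leqnSn m) j))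
      * (A k (widen_ord (leqnSn m) j) * cofactor A k (widen_ord (leqnSn m) j))
    = v (widen_ord (leqnSn m) j) * \sum_(k < m.+1) A k (lift ord0 j) * cofactor A k (widen_ord (leqnSn m) j).
    rewrite mulr_sumr; apply: eq_bigr => k _.
    rewrite !mxE lift0 -[v _ * _ * _]mulrA mulrA -[v _ * _ * _]mulrA.
    by congr (_ * _); rewrite mulrA [(y k - _) * _]mulrC shift.
  rewrite colexp; case: eqP => [e|_]; last by rewrite mulr0.
  move: (congr1 val e) => /=.
  by rewrite /bump leq0n add1n => /eqP; rewrite eqn_leq ltnn andbF.
have E1 : E = \sum_(k < m.+1) (y k - J k) * d.
  have := G (fun _ => 1); rewrite mul1r => <-.
  under eq_bigr do under eq_bigr do rewrite mul1r mulrBl.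
  under eq_bigr do rewrite sumrB.
  rewrite sumrB.
  under eq_bigr do rewrite -mulr_sumr rowS.
  rewrite [X in _ - X = _]exchange_big /=.
  under [X in _ - X = _]eq_bigr do rewrite -mulr_sumr colS.
  by rewrite -sumrB; apply: eq_bigr => k _; rewrite mulrBl.
have G' := G (fun j => J j + J j + 1); simpl in G'.
have LHS : \sum_(k < m.+1) \sum_(j < m.+1)
       ((y k - J j) * (y k - J j - 1)) * (A k j * cofactor A k j)
   = \sum_(k < m.+1) y k ^+ 2 * d - \sum_(k < m.+1) J k ^+ 2 * d
     - (J m + J m + 1) * E.
  under eq_bigr do under eq_bigr do rewrite wt1 !mulrBl.
  under eq_bigr do rewrite !sumrB.
  rewrite !sumrB G'; congr (_ - _ - _).
    by apply: eq_bigr => k _; rewrite -mulr_sumr rowS.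
  by rewrite exchange_big; apply: eq_bigr => k _; rewrite -mulr_sumr colS.
rewrite LHS mulr_suml.
have e2 : ((2 * m.+1)%N%:Z)%:~R = J m + J m :> rat.
  by rewrite /J -intrD -PoszD addnn -mul2n.
have pw : forall k : 'I_m.+1,
    (((a k)%:Z - (k.+1)%:Z) * ((a k)%:Z - (2 * m.+1)%:Z + (k.+1)%:Z - 1))%:~R
    = y k ^+ 2 - J k ^+ 2 - (J m + J m + 1) * (y k - J k) :> rat.
  move=> k; rewrite intrM !(intrB, intrD) e2.
  have -> : (-1 : int)%:~R = - 1 :> rat by [].
  by rewrite /y /J wt2.
rewrite (eq_bigr _ (fun k _ => congr1 (fun x => x * d) (pw k))) /=.
have pw2 : forall k : 'I_m.+1,
   (y k ^+ 2 - J k ^+ 2 - (J m + J m + 1) * (y k - J k)) * d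
   = y k ^+ 2 * d - J k ^+ 2 * d - (J m + J m + 1) * ((y k - J k) * d).
  by move=> k; rewrite mulrBl (mulrBl d) [in RHS]mulrA.
rewrite (eq_bigr _ (fun k _ => pw2 k)) !sumrB E1 mulr_sumr.
done.
Qed.
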